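(* ${\bf K^\boxdot}$ is sound and strongly complete with respect to the class of serial bimodal frames (both $R_1$ and $R_2$ serial): for every $\Gamma\subseteq\mathcal{L}(\boxdot)$ and $\phi\in\mathcal{L}(\boxdot)$, $\Gamma\vdash_{{\bf K^\boxdot}}\phi$ iff $\phi$ is true at every state of every serial bimodal model at which all formulas of $\Gamma$ are true.
   Context: Fix a nonempty set $\mathbf{P}$ of propositional variables. A bimodal model is $\langle S,R_1,R_2,V\rangle$ with $S$ nonempty, $R_1,R_2\subseteq S\times S$, $V:\mathbf{P}\to\mathcal{P}(S)$. $\mathcal{L}(\boxdot):\ \phi::=p\mid\neg\phi\mid(\phi\wedge\phi)\mid\boxdot\phi$. Truth: $\mathcal{M},s\vDash\boxdot\phi$ iff for all $t,u$ with $sR_1t$ and $sR_2u$, ($\mathcal{M},t\vDash\phi\iff\mathcal{M},u\vDash\phi$); atoms and Booleans as usual. ${\bf K^\boxdot}$ has axioms: all instances of propositional tautologies; $\boxdot\top$; $\boxdot\phi\leftrightarrow\boxdot\neg\phi$; $\boxdot\phi\wedge\boxdot\psi\to\boxdot(\phi\wedge\psi)$; $\boxdot\phi\to\boxdot(\phi\vee\psi)\vee\boxdot(\neg\phi\vee\chi)$; and rules: modus ponens and RE: from $\phi\leftrightarrow\psi$ infer $\boxdot\phi\leftrightarrow\boxdot\psi$. *)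

(* Defs.v *)
From Stdlib Require Import List.
Import ListNotations.

Section Logic.
Variable P : Type.

Inductive form : Type :=
| Atom : P -> form
| Neg : form -> form
| And : form -> form -> form
| Dot : form -> form.

Definition Or (a b : form) : form := Neg (And (Neg a) (Neg b)).
Definition Imp (a b : form) : form := Neg (And a (Neg b)).
Definition Iff (a b : form) : form := And (Imp a b) (Imp b a).
Definition Top (p0 : P) : form := Neg (And (Atom p0) (Neg (Atom p0))).

(* Propositional tautologies: true under every Boolean valuation of the
   propositional skeleton, where atoms and ⊡-formulas are treated as
   propositional atoms. *)
Fixpoint beval (v : form -> bool) (f : form) : bool :=
  match f with
  | Atom _ => v f
  | Neg a => negb (beval v a)
  | And a b => andb (beval v a) (beval v b)
  | Dot _ => v f
  end.
Definition tautology (f : form) : Prop := forall v, beval v f = true.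

Inductive thm (p0 : P) : form -> Prop :=
| ax_taut : forall f, tautology f -> thm p0 f
| ax_top : thm p0 (Dot (Top p0))
| ax_neg : forall a, thm p0 (Iff (Dot a) (Dot (Neg a)))
| ax_and : forall a b, thm p0 (Imp (And (Dot a) (Dot b)) (Dot (And a b)))
| ax_or : forall a b c,
    thm p0 (Imp (Dot a) (Or (Dot (Or a b)) (Dot (Or (Neg a) c))))
| rule_mp : forall a b, thm p0 (Imp a b) -> thm p0 a -> thm p0 b
| rule_re : forall a b, thm p0 (Iff a b) -> thm p0 (Iff (Dot a) (Dot b)).

Fixpoint conj (p0 : P) (l : list form) : form :=
  match l with
  | [] => Top p0
  | a :: l' => And a (conj p0 l')
  end.

Definition derives (p0 : P) (Gamma : form -> Prop) (f : form) : Prop :=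
  exists l : list form, (forall a, In a l -> Gamma a) /\ thm p0 (Imp (conj p0 l) f).

Record model : Type := {
  st : Type;
  R1 : st -> st -> Prop;
  R2 : st -> st -> Prop;
  V : P -> st -> Prop
}.

Fixpoint sat (M : model) (s : st M) (f : form) : Prop :=
  match f with
  | Atom p => V M p s
  | Neg a => ~ sat M s a
  | And a b => sat M s a /\ sat M s b
  | Dot a => forall t u, R1 M s t -> R2 M s u -> (sat M t a <-> sat M u a)
  end.

Definition serial_model (M : model) : Prop :=
  (forall s, exists t, R1 M s t) /\ (forall s, exists t, R2 M s t).

Definition serial_consequence (Gamma : form -> Prop) (f : form) : Prop :=
  forall (M : model) (s : st M), serial_model M ->
    (forall a, Gamma a -> sat M s a) -> sat M s f.

End Logic.

Arguments Atom {P}. Arguments Neg {P}. Arguments And {P}. Arguments Dot {P}.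

(* Main.v *)
Require Import Defs.
From Stdlib Require Import List Bool Classical ClassicalEpsilon.
From mathcomp Require classical_sets boolp.
Import ListNotations.

Lemma abI (Q:Prop) : Q -> boolp.asbool Q = true.
Proof. exact (proj1 (reflect_iff _ _ (boolp.asboolP Q))). Qed.
Lemma abE (Q:Prop) : boolp.asbool Q = true -> Q.
Proof. exact (proj2 (reflect_iff _ _ (boolp.asboolP Q))). Qed.
Lemma zl (T:Type) (t0:T) (R: T -> T -> Prop) : (forall t, R t t) -> (forall r s t, R r s -> R s t -> R r t) -> (forall A : T -> Prop, (forall s t, A s -> A t -> R s t \/ R t s) -> exists t, forall s, A s -> R s t) -> exists t, forall s, R t s -> R s t.
Proof.
intros Hr Ht Hc.
destruct (@classical_sets.ZL_preorder T t0 (fun a b => boolp.asbool (R a b))) as [m Hm].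
- intro t. apply abI. apply Hr.
- intros r s t H1 H2. apply abI.
  apply abE in H1. apply abE in H2. eauto.
- intros A HA. destruct (Hc A) as [t Hu].
  + intros s t H1 H2. destruct (HA s t H1 H2) as [H|H];
    apply abE in H; auto.
  + exists t. intros s Hs. apply abI. auto.
- exists m. intros s Hs. 
  assert (H := Hm s). cbv beta in H.
  apply abE. apply H. apply abI. exact Hs.
Qed.

Ltac bdestr :=
  repeat (simpl; match goal with
  | |- context [beval _ ?v ?x] => destruct (beval _ v x)
  | |- context [?v (Atom ?x)] => destruct (v (Atom x))
  | |- context [?v (Dot ?x)] => destruct (v (Dot x))
  end); simpl; try reflexivity.

Ltac taut := unfold tautology, Imp, Iff, Or, Top; let v := fresh "v" in intro v; bdestr.

Section S.
Variable P : Type.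
Variable p0 : P.
Notation F := (form P).
Notation thm := (thm P p0).
Notation Imp := (Imp P).
Notation Iff := (Iff P).
Notation Or := (Or P).
Notation T := (Top P p0).
Notation Bot := (Neg (Top P p0)).
Notation conj := (conj P p0).
Notation derives := (derives P p0).
Notation tautology := (tautology P).

Lemma thm1 a b : thm a -> tautology (Imp a b) -> thm b.
Proof. intros Ha Ht. eapply rule_mp. apply ax_taut; exact Ht. exact Ha. Qed.

Lemma thm2 a b c : thm a -> thm b -> tautology (Imp a (Imp b c)) -> thm c.
Proof. intros Ha Hb Ht. eapply rule_mp; [|exact Hb]. apply (thm1 a); assumption. Qed.

Lemma conj_app v l1 l2 : beval P v (conj (l1 ++ l2)) = beval P v (conj l1) && beval P v (conj l2).
Proof.
  induction l1 as [|a l IH]; simpl.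
  - destruct (v (Atom p0)); reflexivity.
  - rewrite IH. apply andb_assoc.
Qed.

Lemma der_thm X f : thm f -> derives X f.
Proof. intro H. exists []. split. intros a []. eapply thm1. exact H. taut. Qed.

Lemma der_mem X f : X f -> derives X f.
Proof. intro H. exists [f]. split. intros a [<-|[]]. exact H. apply ax_taut. taut. Qed.

Lemma der_and X a b : derives X a -> derives X b -> derives X (And a b).
Proof.
  intros [l1 [H1 T1]] [l2 [H2 T2]]. exists (l1 ++ l2). split.
  - intros x Hx. apply in_app_or in Hx. destruct Hx; auto.
  - eapply thm2. exact T1. exact T2.
    unfold tautology, Imp. intro v. simpl. rewrite conj_app. bdestr.
Qed.

Lemma der_imp X a b : derives X a -> thm (Imp a b) -> derives X b.
Proof.
  intros [l [H1 T1]] Hab. exists l. split. exact H1.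
  eapply thm2. exact T1. exact Hab. taut.
Qed.

Lemma der_t2 X a b c : derives X a -> derives X b -> tautology (Imp (And a b) c) -> derives X c.
Proof. intros Ha Hb Ht. eapply der_imp. apply der_and. exact Ha. exact Hb. apply ax_taut; exact Ht. Qed.

Lemma der_mono (X Y : F -> Prop) f : (forall a, X a -> Y a) -> derives X f -> derives Y f.
Proof. intros H [l [H1 T1]]. exists l. split; auto. Qed.

Lemma split_list (X : F -> Prop) a : forall l, (forall x, In x l -> X x \/ x = a) ->
  exists l', (forall x, In x l' -> X x) /\ thm (Imp (conj l') (Imp a (conj l))).
Proof.
  induction l as [|x l IH]; intro H.
  - exists []. split. intros _ []. apply ax_taut. taut.
  - destruct IH as [l' [H1 T1]]. intros y Hy. apply H. right. exact Hy.
    destruct (H x (or_introl eq_refl)) as [Hx|Hx].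
    + exists (x :: l'). split. intros y [<-|Hy]; auto.
      eapply thm1. exact T1. taut.
    + subst x. exists l'. split. exact H1. eapply thm1. exact T1. taut.
Qed.

Lemma deduction (X : F -> Prop) a b : derives (fun f => X f \/ f = a) b -> derives X (Imp a b).
Proof.
  intros [l [H1 T1]]. destruct (split_list X a l H1) as [l' [H2 T2]].
  exists l'. split. exact H2. eapply thm2. exact T2. exact T1. taut.
Qed.

Definition consis (X : F -> Prop) := ~ derives X Bot.
Definition MCS (X : F -> Prop) := consis X /\ forall f, X f \/ X (Neg f).

Section M.
Variable X : F -> Prop.
Hypothesis HX : MCS X.

Lemma mcs_der f : derives X f -> X f.
Proof.
  intro H. destruct HX as [Hc Hm]. destruct (Hm f) as [|Hn]; auto.
  exfalso. apply Hc. eapply der_t2. exact H. apply der_mem; exact Hn. taut.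
Qed.

Lemma mcs_thm f : thm f -> X f.
Proof. intro; apply mcs_der, der_thm; auto. Qed.

Lemma mcs_neg f : X (Neg f) <-> ~ X f.
Proof.
  split.
  - intros H1 H2. apply (proj1 HX). eapply der_t2. apply der_mem; exact H1. apply der_mem; exact H2. taut.
  - intro H. destruct (proj2 HX f); tauto.
Qed.

Lemma mcs_and a b : X (And a b) <-> X a /\ X b.
Proof.
  split.
  - intro H. split; apply mcs_der; eapply der_imp; try (apply der_mem; exact H); apply ax_taut; taut.
  - intros [H1 H2]. apply mcs_der. eapply der_t2. apply der_mem; exact H1. apply der_mem; exact H2. taut.
Qed.

Lemma mcs_mp a b : thm (Imp a b) -> X a -> X b.
Proof. intros H Ha. apply mcs_der. eapply der_imp. apply der_mem; exact Ha. exact H. Qed.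

Lemma mcs_or a b : X (Or a b) -> X a \/ X b.
Proof.
  unfold Defs.Or. intro H. apply mcs_neg in H. rewrite mcs_and, !mcs_neg in H.
  destruct (classic (X a)); tauto.
Qed.

End M.


Lemma chain_list (T0 : Type) (val : T0 -> F -> Prop) (A : T0 -> Prop) y0 :
  A y0 -> (forall s t, A s -> A t -> (forall f, val s f -> val t f) \/ (forall f, val t f -> val s f)) ->
  forall l, (forall a, In a l -> exists y, A y /\ val y a) ->
  exists y, A y /\ forall a, In a l -> val y a.
Proof.
  intros Hy0 Htot l. induction l as [|x l IH]; intro H.
  - exists y0. split; auto. intros a [].
  - destruct IH as [y [Ay Hy]]. intros a Ha. apply H. right; auto.
    destruct (H x (or_introl eq_refl)) as [z [Az Hz]].
    destruct (Htot y z Ay Az) as [Hyz|Hzy].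
    + exists z. split; auto. intros a [<-|Ha]; auto.
    + exists y. split; auto. intros a [<-|Ha]; auto.
Qed.

Lemma lindenbaum (X : F -> Prop) : consis X -> exists M, MCS M /\ forall f, X f -> M f.
Proof.
  intro HX.
  set (T0 := {Y : F -> Prop | consis Y /\ forall f, X f -> Y f}).
  set (R := fun (a b : T0) => forall f, proj1_sig a f -> proj1_sig b f).
  assert (t0 : T0). { exists X. split; auto. }
  destruct (zl T0 t0 R) as [[M [HM1 HM2]] Hmax].
  - intros t f; auto.
  - intros r s t H1 H2 f Hf; auto.
  - intros A HA. destruct (classic (exists y, A y)) as [[y0 Ay0]|Hne].
    + assert (Hc : consis (fun f => exists y, A y /\ proj1_sig y f)).
      { intros [l [Hl Tl]].
        destruct (chain_list T0 (@proj1_sig _ _) A y0 Ay0 HA l Hl) as [y [Ay Hy]].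
        apply (proj1 (proj2_sig y)). exists l. split; auto. }
      exists (exist _ (fun f => exists y, A y /\ proj1_sig y f)
                 (Logic.conj Hc (fun f Hf => ex_intro _ y0 (Logic.conj Ay0 (proj2 (proj2_sig y0) f Hf))))).
      intros s As f Hf. simpl. eauto.
    + exists t0. intros s As. exfalso. eauto.
  - exists M. split; [split|]; auto.
    intro f. destruct (classic (M f)) as [|Hnf]; [left; auto|right].
    assert (Hd : forall g, ~ M g -> derives M (Imp g Bot)).
    { intros g Hg. apply deduction. apply NNPP. intro Hc.
      assert (Hs : forall h, X h -> M h \/ h = g) by (intros; left; auto).
      specialize (Hmax (exist _ (fun h => M h \/ h = g) (Logic.conj Hc Hs))).
      simpl in Hmax. unfold R in Hmax; simpl in Hmax.
      apply Hg. apply Hmax; auto. }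
    apply NNPP. intro Hnn. apply HM1.
    eapply der_t2. apply (Hd f Hnf). apply (Hd _ Hnn). taut.
Qed.

Lemma mcs_re (X : F -> Prop) a b : MCS X -> thm (Iff a b) -> X (Dot a) -> X (Dot b).
Proof.
  intros HX H Ha. apply rule_re in H. eapply mcs_mp; eauto. eapply thm1. exact H. taut.
Qed.

Definition lam (s : F -> Prop) (f : F) := s (Dot f) /\ forall g, s (Dot (Or f g)).
Definition allD (s : F -> Prop) := forall f, s (Dot f).

Section L.
Variable s : F -> Prop.
Hypothesis Hs : MCS s.

Lemma lam_top : lam s T.
Proof.
  split. apply mcs_thm; auto. apply ax_top.
  intro g. apply (mcs_re s T); auto. apply ax_taut. taut. apply mcs_thm; auto. apply ax_top.
Qed.

Lemma lam_and a b : lam s a -> lam s b -> lam s (And a b).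
Proof.
  intros [A1 A2] [B1 B2]. split.
  - apply (mcs_mp s Hs (And (Dot a) (Dot b))); auto. apply ax_and. apply mcs_and; auto.
  - intro g. apply (mcs_re s (And (Or a g) (Or b g))); auto. apply ax_taut; taut.
    apply (mcs_mp s Hs (And (Dot (Or a g)) (Dot (Or b g)))); auto. apply ax_and. apply mcs_and; auto.
Qed.

Lemma lam_up a b : lam s a -> thm (Imp a b) -> lam s b.
Proof.
  intros [A1 A2] H. split.
  - apply (mcs_re s (Or a b)); auto. eapply thm1. exact H. taut.
  - intro g. apply (mcs_re s (Or a (Or b g))); auto. eapply thm1. exact H. taut.
Qed.

Lemma lam_der f : derives (lam s) f -> lam s f.
Proof.
  intros [l [Hl Tl]]. eapply lam_up; [|exact Tl]. clear Tl.
  induction l as [|x l IH]; simpl.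
  - apply lam_top.
  - apply lam_and. apply Hl; left; auto. apply IH. intros a Ha; apply Hl; right; auto.
Qed.

Lemma exist_succ f (b : bool) : ~ s (Dot f) ->
  exists t, MCS t /\ (forall g, lam s g -> t g) /\ (if b then t f else t (Neg f)).
Proof.
  intro Hn.
  assert (Hc : consis (fun h => lam s h \/ h = (if b then f else Neg f))).
  { intro H. apply deduction in H. apply lam_der in H.
    apply Hn. destruct b.
    - assert (H2 : lam s (Neg f)) by (eapply lam_up; [exact H|apply ax_taut; taut]).
      apply (mcs_mp s Hs (Dot (Neg f))). eapply thm1. apply (ax_neg P p0 f). taut. apply H2.
    - assert (H2 : lam s f) by (eapply lam_up; [exact H|apply ax_taut; taut]).
      apply H2. }
  destruct (lindenbaum _ Hc) as [t [Ht Hsub]].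
  exists t. split; auto. split. intros; apply Hsub; auto.
  destruct b; apply Hsub; right; reflexivity.
Qed.

Lemma lam_dec f : s (Dot f) -> lam s f \/ lam s (Neg f).
Proof.
  intro H. destruct (classic (lam s f)) as [|Hn]; [left; auto|right].
  assert (Hg : exists g, ~ s (Dot (Or f g))).
  { apply NNPP. intro Hc. apply Hn. split; auto. intro g. apply NNPP. intro; apply Hc; eauto. }
  destruct Hg as [g Hg]. split.
  - eapply mcs_mp; eauto. eapply thm1. apply (ax_neg P p0 f). taut.
  - intro h. assert (Ho := mcs_mp s Hs _ _ (ax_or P p0 f g h) H).
    apply mcs_or in Ho; auto. tauto.
Qed.

End L.

Definition cst := {s : F -> Prop | MCS s}.
Definition cR (s t : cst) : Prop :=
  (allD (proj1_sig s) -> t = s) /\ (~ allD (proj1_sig s) -> forall g, lam (proj1_sig s) g -> proj1_sig t g).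
Definition cM : model P := {| st := cst; R1 := cR; R2 := cR; V := fun p s => proj1_sig s (Atom p) |}.

Lemma truth f : forall s : cst, sat P cM s f <-> proj1_sig s f.
Proof.
  induction f as [p|a IH|a IHa b IHb|a IH]; intro s; simpl.
  - tauto.
  - rewrite IH. symmetry. apply mcs_neg. apply (proj2_sig s).
  - rewrite IHa, IHb. symmetry. apply mcs_and. apply (proj2_sig s).
  - destruct s as [s Hs]. simpl. split.
    + intro H. apply NNPP. intro Hn.
      assert (HnA : ~ allD s) by (intro HA; apply Hn, HA).
      destruct (exist_succ s Hs a true Hn) as [t [Ht [Hl1 Ha1]]].
      destruct (exist_succ s Hs a false Hn) as [u [Hu [Hl2 Ha2]]].
      specialize (H (exist _ t Ht) (exist _ u Hu)).
      rewrite !IH in H. simpl in H.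
      assert (Hr1 : cR (exist _ s Hs) (exist _ t Ht)) by (split; simpl; tauto).
      assert (Hr2 : cR (exist _ s Hs) (exist _ u Hu)) by (split; simpl; tauto).
      specialize (H Hr1 Hr2). apply (proj1 (mcs_neg u Hu a) Ha2). tauto.
    + intros H t u [Ht1 Ht2] [Hu1 Hu2]. simpl in *. rewrite !IH.
      destruct (classic (allD s)) as [HA|HA].
      * rewrite (Ht1 HA), (Hu1 HA). tauto.
      * destruct (lam_dec s Hs a H) as [Hl|Hl].
        -- split; intros _; auto.
        -- assert (A1 := Ht2 HA _ Hl). assert (A2 := Hu2 HA _ Hl).
           rewrite mcs_neg in A1 by apply (proj2_sig t).
           rewrite mcs_neg in A2 by apply (proj2_sig u). tauto.
Qed.

Lemma cM_serial : serial_model P cM.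
Proof.
  assert (H : forall s : cst, exists t, cR s t).
  { intros [s Hs]. destruct (classic (allD s)) as [HA|HA].
    - exists (exist _ s Hs). split; simpl; tauto.
    - assert (Hf : exists f, ~ s (Dot f)) by (apply NNPP; intro Hc; apply HA; intro f; apply NNPP; eauto).
      destruct Hf as [f Hf]. destruct (exist_succ s Hs f true Hf) as [t [Ht [Hl _]]].
      exists (exist _ t Ht). split; simpl; tauto. }
  split; exact H.
Qed.

Lemma completeness (Gamma : F -> Prop) (phi : F) : serial_consequence P Gamma phi -> derives Gamma phi.
Proof.
  intro H. apply NNPP. intro Hn.
  assert (Hc : consis (fun f => Gamma f \/ f = Neg phi)).
  { intro Hd. apply deduction in Hd. apply Hn. eapply der_imp. exact Hd. apply ax_taut; taut. }
  destruct (lindenbaum _ Hc) as [M [HM Hsub]].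
  specialize (H cM (exist _ M HM) cM_serial).
  assert (Hp : proj1_sig (exist MCS M HM) phi).
  { apply truth. apply H. intros a Ha. apply truth. simpl. auto. }
  simpl in Hp. apply (proj1 (mcs_neg M HM phi)); auto.
Qed.

End S.

Section Sound.
Variable P : Type.
Variable p0 : P.

Lemma beval_sat (M : model P) (s : st P M) :
  let v := fun g => if excluded_middle_informative (sat P M s g) then true else false in
  forall g, beval P v g = true <-> sat P M s g.
Proof.
  intro v. induction g as [p|a IH|a IHa b IHb|a IH]; simpl;
    try (unfold v; destruct (excluded_middle_informative _); split; intro; auto; discriminate).
  - rewrite <- IH. destruct (beval P v a); simpl; split; intro; try discriminate; auto; tauto.
  - rewrite <- IHa, <- IHb. destruct (beval P v a), (beval P v b); simpl; split; intro; try discriminate; tauto.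
Qed.

Lemma taut_sound M s f : tautology P f -> sat P M s f.
Proof. intro H. apply (beval_sat M s). apply H. Qed.

Lemma thm_sound f : thm P p0 f -> forall M, serial_model P M -> forall s, sat P M s f.
Proof.
  intros H M [HS1 HS2]. induction H; intro s.
  - apply taut_sound; auto.
  - simpl. intros. tauto.
  - simpl. split; intros [H1 H2]; apply H2; intros t u Ht Hu; specialize (H1 t u Ht Hu); tauto.
  - simpl. intros [[Ha Hb] Hn]. apply Hn. intros t u Ht Hu.
    specialize (Ha t u Ht Hu). specialize (Hb t u Ht Hu). tauto.
  - simpl. intros [Ha Hn]. apply Hn. intros [H1 H2].
    destruct (HS1 s) as [t0 Ht0]. destruct (HS2 s) as [u0 Hu0].
    destruct (classic (sat P M t0 a)) as [Hta|Hta].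
    + apply H1. intros t u Ht Hu.
      assert (sat P M u a) by (apply (Ha t0 u Ht0 Hu); auto).
      assert (sat P M t a) by (apply (Ha t u0 Ht Hu0); apply (Ha t0 u0 Ht0 Hu0); auto).
      tauto.
    + apply H2. intros t u Ht Hu.
      assert (~ sat P M u a) by (intro; apply Hta; apply (Ha t0 u Ht0 Hu); auto).
      assert (~ sat P M t a) by (intro Hx; apply Hta; apply (Ha t0 u0 Ht0 Hu0); apply (Ha t u0 Ht Hu0); auto).
      tauto.
  - specialize (IHthm1 s). specialize (IHthm2 s). simpl in IHthm1. apply NNPP. tauto.
  - simpl. simpl in IHthm.
    assert (E : forall x, sat P M x a <-> sat P M x b).
    { intro x. specialize (IHthm x). split; intro; apply NNPP; tauto. }
    split; intros [H1 H2]; apply H2; intros t u Ht Hu; rewrite <- !E || rewrite !E; apply H1; auto.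
Qed.

End Sound.

Theorem mainTheorem11 (P : Type) (p0 : P) (Gamma : form P -> Prop) (phi : form P) :
  derives P p0 Gamma phi <-> serial_consequence P Gamma phi.
Proof.
  split.
  - intros [l [Hl Tl]] M s HM HG.
    assert (Hc : sat P M s (conj P p0 l)).
    { clear Tl. induction l as [|x l IH]; simpl.
      - tauto.
      - split. apply HG, Hl; left; auto. apply IH. intros a Ha; apply Hl; right; auto. }
    assert (H := thm_sound P p0 _ Tl M HM s). simpl in H. apply NNPP. tauto.
  - apply completeness.
Qed.
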